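(* For all integers $m,n\geq 3$, with $T_{m,n}=C_m\Box C_n$, we have $\chi_i(T_{m,n})\geq 5$. Moreover, $\chi_i(T_{m,n})=5$ if and only if $m\equiv 0\pmod 5$ and $n\equiv 0 \pmod 5$.
   Context: For a graph $G$, an incidence is a pair $(v,e)$ with $v\in V(G)$, $e\in E(G)$ and $v$ incident with $e$. Two incidences $(v,e)$ and $(w,f)$ are adjacent if $v=w$, or $e=f$, or the edge $vw$ equals $e$ or $f$. An incidence $k$-coloring of $G$ is a map from the set of incidences of $G$ to a set of $k$ colors such that adjacent incidences receive distinct colors; the incidence chromatic number $\chi_i(G)$ is the least such $k$. $C_n$ denotes the cycle on $n$ vertices and $\Box$ the Cartesian product of graphs: $G\Box H$ has vertex set $V(G)\times V(H)$, with $(u_1,v_1)$ adjacent to $(u_2,v_2)$ iff either $u_1=u_2$ and $v_1v_2\in E(H)$, or $v_1=v_2$ and $u_1u_2\in E(G)$. *)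

(* Defs.v *)
From mathcomp Require Import all_boot.
Set Implicit Arguments. Unset Strict Implicit. Unset Printing Implicit Defensive.

(* A simple graph: a finite vertex type V with a symmetric irreflexive
   adjacency relation adj.  Edges are 2-element vertex sets {x,y} with adj x y. *)
Definition is_edge (V : finType) (adj : rel V) (e : {set V}) : bool :=
  [exists x, exists y, adj x y && (e == [set x; y])].

Definition is_incidence (V : finType) (adj : rel V) (a : V * {set V}) : bool :=
  is_edge adj a.2 && (a.1 \in a.2).

Definition inc_adj (V : finType) (a b : V * {set V}) : bool :=
  [|| a.1 == b.1, a.2 == b.2, [set a.1; b.1] == a.2 | [set a.1; b.1] == b.2].

Definition incidence_coloring (V : finType) (adj : rel V) (k : nat)
    (f : {ffun V * {set V} -> 'I_k}) : bool :=
  [forall a, forall b,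
     [&& is_incidence adj a, is_incidence adj b, a != b & inc_adj a b]
       ==> (f a != f b)].

Definition incidence_colorable (V : finType) (adj : rel V) (k : nat) : bool :=
  [exists f : {ffun V * {set V} -> 'I_k}, incidence_coloring adj f].

Lemma incidence_colorable_exists (V : finType) (adj : rel V) :
  exists k, incidence_colorable adj k.
Proof.
exists #|{: V * {set V}}|; apply/existsP.
exists [ffun a => enum_rank a]; apply/forallP => a; apply/forallP => b.
apply/implyP => /and4P [_ _ nab _]; rewrite !ffunE.
by apply: contra nab => /eqP /enum_rank_inj ->.
Qed.

Definition incidence_chromatic_number (V : finType) (adj : rel V) : nat :=
  ex_minn (incidence_colorable_exists adj).

(* The cycle C_m on vertex set 'I_m (a genuine cycle for m >= 3). *)
Definition cycle_adj (m : nat) : rel 'I_m :=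
  fun i j => (val j == (val i).+1 %% m) || (val i == (val j).+1 %% m).
Arguments cycle_adj m : clear implicits.

Definition box_adj (U W : finType) (g : rel U) (h : rel W) : rel (U * W) :=
  fun x y => ((x.1 == y.1) && h x.2 y.2) || ((x.2 == y.2) && g x.1 y.1).

Definition torus_adj (m n : nat) : rel ('I_m * 'I_n) :=
  box_adj (cycle_adj m) (cycle_adj n).
Arguments torus_adj m n : clear implicits.

(* Main.v *)
Require Import Defs.
From Stdlib Require Import ZArith Lia.
From mathcomp Require Import all_boot zify.
Set Implicit Arguments. Unset Strict Implicit. Unset Printing Implicit Defensive.

Section Core.
Local Open Scope Z_scope.
Variable h : Z -> Z -> 'I_5.
Hypothesis Hrb : forall i j,
  uniq [:: h (i+1) j; h (i-1) j; h i (j+1); h i (j-1); h i j].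

Lemma hq a b a' b' : a = a' -> b = b' -> h a b = h a' b'.
Proof. by move=> -> ->. Qed.

Lemma cover a i j : a = h (i+1) j \/ a = h (i-1) j \/ a = h i (j+1) \/
  a = h i (j-1) \/ a = h i j.
Proof.
set s := [:: h (i+1) j; h (i-1) j; h i (j+1); h i (j-1); h i j].
case: (boolP (a \in s)).
  rewrite !inE => /orP[/eqP->|/orP[/eqP->|/orP[/eqP->|/orP[/eqP->|/eqP->]]]];
  tauto.
move=> Ha.
have U : uniq (a :: s) by rewrite cons_uniq Ha Hrb.
have := max_card (mem (a :: s)).
by rewrite (card_uniqP U) card_ord.
Qed.

Definition cl i j a b := Z.abs (a - i) + Z.abs (b - j) <= 1.

Lemma ne i j i1 j1 i2 j2 : cl i j i1 j1 -> cl i j i2 j2 ->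
  (i1 <> i2 \/ j1 <> j2) -> h i1 j1 <> h i2 j2.
Proof.
have C : forall a b, cl i j a b -> (a = i+1 /\ b = j) \/ (a = i-1 /\ b = j) \/
   (a = i /\ b = j+1) \/ (a = i /\ b = j-1) \/ (a = i /\ b = j) by rewrite /cl; lia.
move=> /C H1 /C H2.
have U := Hrb i j.
case: H1 => [[-> ->]|[[-> ->]|[[-> ->]|[[-> ->]|[-> ->]]]]];
case: H2 => [[-> ->]|[[-> ->]|[[-> ->]|[[-> ->]|[-> ->]]]]] => Hd E;
  try (exfalso; lia); move: U; rewrite /= E !inE !eqxx /= ?orbT /= ?andbF //.
Qed.

Lemma d2 i1 j1 i2 j2 : Z.abs (i1-i2) + Z.abs (j1-j2) <= 2 ->
  (i1 <> i2 \/ j1 <> j2) -> h i1 j1 <> h i2 j2.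
Proof.
move=> D N.
case: (Z.lt_total i1 i2) => [lt|[eq|gt]].
- apply: (ne (i := i2 - 1) (j := j2)); rewrite /cl; lia.
- case: (Z.lt_total j1 j2) => [lt|[eq2|gt]].
  + apply: (ne (i := i2) (j := j2 - 1)); rewrite /cl; lia.
  + lia.
  + apply: (ne (i := i2) (j := j2 + 1)); rewrite /cl; lia.
- apply: (ne (i := i2 + 1) (j := j2)); rewrite /cl; lia.
Qed.

Lemma conf p1 p2 q1 q2 a : h p1 p2 = a -> h q1 q2 = a ->
  Z.abs (p1-q1) + Z.abs (p2-q2) <= 2 -> (p1 <> q1 \/ p2 <> q2) -> False.
Proof. by move=> E1 E2 D N; apply: (d2 D N); rewrite E1 E2. Qed.

Ltac cf E1 E2 := exfalso; apply: (conf E1 E2); lia.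

Lemma Q i j s t : (s = 1 \/ s = -1) -> (t = 1 \/ t = -1) ->
  h (i+s) (j+2*t) = h i j \/ h (i+2*s) (j+t) = h i j.
Proof.
move=> hs ht.
have K : forall p1 p2, h p1 p2 = h i j ->
  (p1 = i+s /\ p2 = j+2*t) \/ (p1 = i+2*s /\ p2 = j+t) \/
  (Z.abs (p1-i) + Z.abs (p2-j) <= 2 /\ (p1 <> i \/ p2 <> j)) ->
  h (i+s) (j+2*t) = h i j \/ h (i+2*s) (j+t) = h i j.
  move=> p1 p2 E [[<- <-]|[[<- <-]|[D N]]]; [by left|by right|].
  by case: (d2 D N).
case: (cover (h i j) (i+s) (j+t)) => [E|[E|[E|[E|E]]]];
  apply: (K _ _ (esym E)); lia.
Qed.

Lemma Qg i j s t a b c d : (s = 1 \/ s = -1) -> (t = 1 \/ t = -1) ->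
  a = i+s -> b = j+2*t -> c = i+2*s -> d = j+t ->
  h a b = h i j \/ h c d = h i j.
Proof. by move=> hs ht -> -> -> ->; apply: Q. Qed.

Definition TA i j := h (i+1) (j+2) = h i j /\ h (i+2) (j-1) = h i j /\
  h (i-1) (j-2) = h i j /\ h (i-2) (j+1) = h i j.
Definition TB i j := h (i+2) (j+1) = h i j /\ h (i+1) (j-2) = h i j /\
  h (i-2) (j-1) = h i j /\ h (i-1) (j+2) = h i j.

Lemma full i j : TA i j \/ TB i j.
Proof.
have Qpp := @Qg i j 1 1 (i+1) (j+2) (i+2) (j+1) ltac:(lia) ltac:(lia)
  ltac:(lia) ltac:(lia) ltac:(lia) ltac:(lia).
have Qpm := @Qg i j 1 (-1) (i+1) (j-2) (i+2) (j-1) ltac:(lia) ltac:(lia)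
  ltac:(lia) ltac:(lia) ltac:(lia) ltac:(lia).
have Qmp := @Qg i j (-1) 1 (i-1) (j+2) (i-2) (j+1) ltac:(lia) ltac:(lia)
  ltac:(lia) ltac:(lia) ltac:(lia) ltac:(lia).
have Qmm := @Qg i j (-1) (-1) (i-1) (j-2) (i-2) (j-1) ltac:(lia) ltac:(lia)
  ltac:(lia) ltac:(lia) ltac:(lia) ltac:(lia).
case: Qpp => [A1|B1].
- case: Qpm => [E2|A2].
    case: Qmp => [E3|E3]; first by cf A1 E3.
    by case: Qmm => [E4|E4]; [cf E2 E4 | cf E3 E4].
  case: Qmp => [E3|A3]; first by cf A1 E3.
  case: Qmm => [A4|E4]; last by cf A3 E4.
  by left.
- case: Qpm => [B2|E2]; last by cf B1 E2.
  case: Qmm => [E3|B3]; first by cf B2 E3.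
  case: Qmp => [E4|B4]; last by cf B3 B4.
  by right.
Qed.

Lemma TA_eq a b a' b' : TA a b -> a = a' -> b = b' -> TA a' b'.
Proof. by move=> ? <- <-. Qed.
Lemma TB_eq a b a' b' : TB a b -> a = a' -> b = b' -> TB a' b'.
Proof. by move=> ? <- <-. Qed.

Lemma TA_12 i j : TA i j -> TA (i+1) (j+2).
Proof.
move=> [E1 _]; case: (full (i+1) (j+2)) => [//|[_ [_ [F _]]]].
exfalso; apply: (conf (etrans F E1) (erefl (h i j))); lia.
Qed.
Lemma TA_2m1 i j : TA i j -> TA (i+2) (j-1).
Proof.
move=> [_ [E1 _]]; case: (full (i+2) (j-1)) => [//|[_ [_ [_ F]]]].
exfalso; apply: (conf (etrans F E1) (erefl (h i j))); lia.
Qed.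
Lemma TB_21 i j : TB i j -> TB (i+2) (j+1).
Proof.
move=> [E1 _]; case: (full (i+2) (j+1)) => [[_ [_ [_ F]]]|//].
exfalso; apply: (conf (etrans F E1) (erefl (h i j))); lia.
Qed.
Lemma TB_1m2 i j : TB i j -> TB (i+1) (j-2).
Proof.
move=> [_ [E1 _]]; case: (full (i+1) (j-2)) => [[_ [_ [_ F]]]|//].
exfalso; apply: (conf (etrans F E1) (erefl (h i j))); lia.
Qed.

Lemma TA_5 i j : TA i j -> h (i+5) j = h i j /\ TA (i+5) j.
Proof.
move=> T0.
have T1 := TA_12 T0. have T2 := TA_2m1 T1. have T3 := TA_2m1 T2.
split; last by apply: (TA_eq T3); lia.
case: T0 => [E1 _]; case: T1 => [_ [E2 _]]; case: T2 => [_ [E3 _]].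
rewrite -E1 -E2 -E3; apply: hq; lia.
Qed.
Lemma TB_5 i j : TB i j -> h (i+5) j = h i j /\ TB (i+5) j.
Proof.
move=> T0.
have T1 := TB_21 T0. have T2 := TB_21 T1. have T3 := TB_1m2 T2.
split; last by apply: (TB_eq T3); lia.
case: T0 => [E1 _]; case: T1 => [E2 _]; case: T2 => [_ [E3 _]].
rewrite -E1 -E2 -E3; apply: hq; lia.
Qed.

Lemma iter5 (T : Z -> Z -> Prop)
  (TT : forall a b a' b', T a b -> a = a' -> b = b' -> T a' b')
  (HT : forall a b, T a b -> h (a+5) b = h a b /\ T (a+5) b) a b :
  T a b -> forall k, h (a + 5 * Z.of_nat k) b = h a b /\ T (a + 5 * Z.of_nat k) b.
Proof.
move=> T0; elim=> [|k [IH1 IH2]].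
  by split; [apply: hq; lia | apply: (TT _ _ _ _ T0); lia].
have [E T'] := HT _ _ IH2.
split.
  by rewrite -IH1 -E; apply: hq; lia.
by apply: (TT _ _ _ _ T'); lia.
Qed.

Lemma core M : 0 <= M -> (forall i j, h (i+M) j = h i j) -> M mod 5 = 0.
Proof.
move=> HM Hp.
have [q [r [Eq [Hr Hq]]]] : exists q r, M = 5 * q + r /\ 0 <= r < 5 /\ 0 <= q.
  exists (M / 5), (M mod 5). split; first by apply: Z.div_mod.
  split; [apply: Z.mod_pos_bound; lia|]. apply: Z.div_pos; lia.
have [k Hk] : exists k, q = Z.of_nat k by exists (Z.to_nat q); lia.
have [E1 E2] : h (5 * q + 5) 0 = h (5*q) 0 /\ h (5*q) 0 = h 0 0.
  case: (full 0 0) => T0.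
    have [E T] := iter5 TA_eq TA_5 T0 k.
    have [E' _] := TA_5 T.
    split; [rewrite (hq (_ : 5*q+5 = 0 + 5 * Z.of_nat k + 5) (erefl 0)); last lia|].
      by rewrite E'; apply: hq; lia.
    by rewrite -E; apply: hq; lia.
  have [E T] := iter5 TB_eq TB_5 T0 k.
  have [E' _] := TB_5 T.
  split; [rewrite (hq (_ : 5*q+5 = 0 + 5 * Z.of_nat k + 5) (erefl 0)); last lia|].
    by rewrite E'; apply: hq; lia.
  by rewrite -E; apply: hq; lia.
have E3 : h (5 * q + r) 0 = h (5 * q) 0.
  by rewrite E2 -(Hp 0 0); apply: hq; lia.
case: (Z.eq_dec r 0) => [r0|rn0]; first by rewrite Eq; rewrite r0; 
  rewrite Z.add_0_r Z.mul_comm Z.mod_mul.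
case: (Z.le_gt_cases r 2) => Hr2.
  exfalso; apply: (conf E3 (erefl _)); lia.
exfalso; apply: (conf E3 E1); lia.
Qed.

End Core.

Lemma set2C (T : finType) (x y : T) : [set x; y] = [set y; x].
Proof. by apply/setP => z; rewrite !inE orbC. Qed.

Section Gen.
Variables (V : finType) (adj : rel V).

Lemma inc_edge x y : adj x y -> is_incidence adj (x, [set x; y]).
Proof.
move=> H; rewrite /is_incidence /=; apply/andP; split; last by rewrite set21.
by apply/existsP; exists x; apply/existsP; exists y; rewrite H eqxx.
Qed.

Variables (k : nat) (f : {ffun V * {set V} -> 'I_k}).
Hypothesis Hf : incidence_coloring adj f.

Lemma col_ne a b : is_incidence adj a -> is_incidence adj b -> a != b ->
  inc_adj a b -> f a != f b.
Proof.
move=> ha hb nab iab.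
move/forallP: Hf => /(_ a) /forallP /(_ b) /implyP; apply.
by rewrite ha hb nab iab.
Qed.

Lemma P1 x y y' : adj x y -> adj x y' -> y != x -> y != y' ->
  f (x, [set x; y]) != f (x, [set x; y']).
Proof.
move=> a1 a2 n1 n2; apply: col_ne; rewrite ?inc_edge //.
  apply/negP => /eqP [] E.
  have : y \in [set x; y] by rewrite set22.
  by rewrite E !inE (negbTE n1) (negbTE n2).
by rewrite /inc_adj /= eqxx.
Qed.

Lemma P2 x y w : adj x y -> adj w x -> w != x ->
  f (x, [set x; y]) != f (w, [set w; x]).
Proof.
move=> a1 a2 n; apply: col_ne; rewrite ?inc_edge //.
  apply/negP => /eqP E; case: E => E1 _; by move: n; rewrite E1 eqxx.
by rewrite /inc_adj /= (set2C x w) eqxx !orbT.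
Qed.

Lemma star x y1 y2 y3 y4 w : uniq [:: x; y1; y2; y3; y4] ->
  (forall y, y \in [:: y1; y2; y3; y4] -> adj x y && adj y x) ->
  w \in [:: y1; y2; y3; y4] ->
  uniq [:: f (x, [set x; y1]); f (x, [set x; y2]); f (x, [set x; y3]);
           f (x, [set x; y4]); f (w, [set w; x])].
Proof.
move=> U A Hw.
have A1 y : y \in [:: y1; y2; y3; y4] -> adj x y.
  by move=> /A /andP[].
have wx : w != x.
  by apply/negP => /eqP E; move: U Hw; rewrite E /= => /andP[/negP].
have Aw : adj w x by case/andP: (A _ Hw).
move: (U); rewrite /= !inE !negb_or => /and5P[/and4P[n1 n2 n3 n4]
  /and3P[n12 n13 n14] /andP[n23 n24] n34 _].
have a1 : adj x y1 by apply: A1; rewrite !inE eqxx.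
have a2 : adj x y2 by apply: A1; rewrite !inE eqxx ?orbT.
have a3 : adj x y3 by apply: A1; rewrite !inE eqxx ?orbT.
have a4 : adj x y4 by apply: A1; rewrite !inE eqxx ?orbT.
have m1 : y1 != x by rewrite eq_sym.
have m2 : y2 != x by rewrite eq_sym.
have m3 : y3 != x by rewrite eq_sym.
by rewrite !P2 // !P1.
Qed.

End Gen.

Lemma uniq_le k (s : seq 'I_k) : uniq s -> size s <= k.
Proof. by move=> U; rewrite -(card_uniqP U); apply: leq_trans (max_card _) _; rewrite card_ord. Qed.

Lemma pig5 (c1 c2 c3 c4 a b : 'I_5) : uniq [:: c1; c2; c3; c4; a] ->
  uniq [:: c1; c2; c3; c4; b] -> a = b.
Proof.
move=> U1 U2; apply/eqP/negPn/negP => nab.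
have : uniq [:: a, b, c1, c2, c3 & [:: c4]].
  move: U1 U2; rewrite /= !inE !negb_or.
  move=> /and5P[/and4P[p1 p2 p3 p4] /and3P[p5 p6 p7] /andP[p8 p9] p10 _].
  move=> /and5P[/and4P[_ _ _ q4] /and3P[_ _ q7] /andP[_ q9] q10 _].
  by rewrite nab !(eq_sym a) !(eq_sym b) p4 p7 p9 p10 q4 q7 q9 q10 p1 p2 p3 p5 p6 p8.
by move/uniq_le.
Qed.

Section Col2.
Variables (V : finType) (adj : rel V).
Hypothesis adj_sym : forall x y, adj x y -> adj y x.
Hypothesis adj_irr : forall x y, adj x y -> x != y.
Variables (k : nat) (col : V -> 'I_k).
Hypothesis Hc1 : forall x y, adj x y -> col x != col y.
Hypothesis Hc2 : forall v y y', adj v y -> adj v y' -> y != y' -> col y != col y'.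

Definition oth (v : V) (e : {set V}) := odflt v [pick w in e :\ v].

Lemma othE v w : v != w -> oth v [set v; w] = w.
Proof.
move=> nvw; rewrite /oth; case: pickP => [z|].
  by rewrite !inE => /andP[/negbTE -> /eqP].
by move/(_ w); rewrite !inE eqxx orbT andbT eq_sym nvw.
Qed.

Lemma incE a : is_incidence adj a -> exists w, adj a.1 w /\ a.2 = [set a.1; w].
Proof.
case/andP => /existsP[x /existsP[y /andP[Hxy /eqP E]]]; rewrite E.
case/set2P => ->; first by exists y.
by exists x; rewrite set2C; split=> //; apply: adj_sym.
Qed.

Lemma col2_ok : incidence_coloring adj [ffun a => col (oth a.1 a.2)].
Proof.
apply/forallP => a; apply/forallP => b; apply/implyP.
case/and4P => ha hb nab iab.
case: (incE ha) => w [aw ea]; case: (incE hb) => w' [aw' eb].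
move: a b ha hb nab iab aw ea aw' eb => [v e] [v' e'] /= _ _ + + aw ea aw' eb; subst e e'.
rewrite !ffunE /= !othE ?adj_irr //.
rewrite /inc_adj /=.
case: (eqVneq v v') => [E|nvv'] nab.
  subst v'; move=> _; apply: Hc2 aw aw' _; apply/negP => /eqP E; move: nab; by rewrite E eqxx.
have mem2 (x y z : V) (S : {set V}) : S = [set y; z] -> x \in S -> x = y \/ x = z.
  by move=> -> /set2P.
move=> /or4P[//|/eqP E|/eqP E|/eqP E].
- have [vv|vw] := mem2 v' v w _ (esym E) (set21 _ _); first by rewrite vv eqxx in nvv'.
  have [vv|vw'] := mem2 v v' w' _ E (set21 _ _); first by rewrite vv eqxx in nvv'.
  subst; rewrite eq_sym; apply: Hc1; exact: adj_sym.
- have [vv|vw] := mem2 v' v w _ E (set22 _ _); first by rewrite vv eqxx in nvv'.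
  subst; exact: Hc1.
- have [vv|vw'] := mem2 v v' w' _ E (set21 _ _); first by rewrite vv eqxx in nvv'.
  subst; rewrite eq_sym; exact: Hc1.
Qed.
End Col2.

Section Zo.
Variables (m : nat) (Hm : 0 < m).
Local Notation M := (Z.of_nat m).

Definition zo (i : Z) : 'I_m := Ordinal (ltn_pmod (Z.to_nat (i mod M)) Hm).

Lemma zo_val i : Z.of_nat (zo i) = (i mod M)%Z.
Proof.
have B := Z.mod_pos_bound i M ltac:(lia).
rewrite /= modn_small; lia.
Qed.

Lemma zo_succ i : nat_of_ord (zo (i+1)) = (zo i).+1 %% m.
Proof.
apply: Nat2Z.inj; rewrite zo_val.
have V := zo_val i.
have B := ltn_ord (zo i).
have D := Z.div_mod i M ltac:(lia).
case: (ltngtP (zo i).+1 m) => [lt|gt|eq]; last first.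
- rewrite eq modnn. symmetry; apply: Z.mod_unique (i / M + 1)%Z _ _ _; lia.
- lia.
- rewrite modn_small //. symmetry; apply: Z.mod_unique (i / M)%Z _ _ _; lia.
Qed.

Lemma zo_add i : zo (i + M) = zo i.
Proof.
apply: val_inj; apply: Nat2Z.inj; rewrite !zo_val.
rewrite -{1}(Z.mul_1_l M) Z.mod_add; lia.
Qed.

Lemma zo_neqb a b : (0 < Z.abs (a - b) < M)%Z -> (zo a == zo b) = false.
Proof.
move=> H; apply/negP => /eqP E.
have := congr1 (fun x => Z.of_nat (nat_of_ord x)) E; rewrite /= !zo_val => E'.
have D1 := Z.div_mod a M ltac:(lia); have D2 := Z.div_mod b M ltac:(lia).
have : (a - b = M * (a / M - b / M))%Z by lia.
move: (a / M - b / M)%Z => d Hd; rewrite Hd in H.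
case: (Z.lt_total d 0) => [lt|[eq|gt]]; [nia|subst; lia|nia].
Qed.
End Zo.

Section Tor.
Variables (m n : nat) (hm : 3 <= m) (hn : 3 <= n).
Let Hm : 0 < m := leq_trans (isT : 0 < 3) hm.
Let Hn : 0 < n := leq_trans (isT : 0 < 3) hn.
Local Notation V := ('I_m * 'I_n)%type.
Local Notation adj := (torus_adj m n).

Definition phi (i j : Z) : V := (zo Hm i, zo Hn j).

Lemma cyc p (Hp : 0 < p) i :
  cycle_adj p (zo Hp i) (zo Hp (i+1)) && cycle_adj p (zo Hp (i+1)) (zo Hp i).
Proof.
have E := zo_succ Hp i.
by apply/andP; split; apply/orP; [left|right]; apply/eqP; exact: E.
Qed.

Lemma cycm p (Hp : 0 < p) i :
  cycle_adj p (zo Hp i) (zo Hp (i-1)) && cycle_adj p (zo Hp (i-1)) (zo Hp i).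
Proof. by have := cyc Hp (i-1); rewrite Z.sub_add andbC. Qed.

Definition nbrs i j := [:: phi (i+1) j; phi (i-1) j; phi i (j+1); phi i (j-1)].

Lemma nbr i j y : y \in nbrs i j -> adj (phi i j) y && adj y (phi i j).
Proof.
rewrite /nbrs !inE => /or4P[] /eqP ->; rewrite /torus_adj /box_adj /= eqxx /=.
- by case/andP: (cyc Hm i) => -> ->; rewrite !orbT.
- by case/andP: (cycm Hm i) => -> ->; rewrite !orbT.
- by case/andP: (cyc Hn j) => -> ->.
- by case/andP: (cycm Hn j) => -> ->.
Qed.

Lemma uniq_phi i j : uniq (phi i j :: nbrs i j).
Proof.
rewrite /= !inE !xpair_eqE !eqxx /=.
rewrite !zo_neqb //; lia.
Qed.

Section Col5.
Variable f : {ffun V * {set V} -> 'I_5}.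
Hypothesis Hf : incidence_coloring adj f.

Definition hh i j := f (phi (i-1) j, [set phi (i-1) j; phi i j]).

Lemma claim i j w : w \in nbrs i j -> f (w, [set w; phi i j]) = hh i j.
Proof.
move=> Hw.
have S1 := star Hf (uniq_phi i j) (@nbr i j) Hw.
have S2 := star Hf (uniq_phi i j) (@nbr i j) (_ : phi (i-1) j \in nbrs i j).
apply: pig5 S1 (S2 _); by rewrite /nbrs !inE eqxx ?orbT.
Qed.

Lemma rainbow i j :
  uniq [:: hh (i+1) j; hh (i-1) j; hh i (j+1); hh i (j-1); hh i j].
Proof.
have E1 : hh (i+1) j = f (phi i j, [set phi i j; phi (i+1) j]).
  by rewrite /hh Z.add_simpl_r.
have E2 : hh (i-1) j = f (phi i j, [set phi i j; phi (i-1) j]).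
  rewrite -(@claim (i-1) j (phi i j)) //.
  by rewrite /nbrs Z.sub_add !inE eqxx.
have E3 : hh i (j+1) = f (phi i j, [set phi i j; phi i (j+1)]).
  rewrite -(@claim i (j+1) (phi i j)) //.
  by rewrite /nbrs Z.add_simpl_r !inE eqxx ?orbT.
have E4 : hh i (j-1) = f (phi i j, [set phi i j; phi i (j-1)]).
  rewrite -(@claim i (j-1) (phi i j)) //.
  by rewrite /nbrs Z.sub_add !inE eqxx ?orbT.
have E5 : hh i j = f (phi (i+1) j, [set phi (i+1) j; phi i j]).
  by rewrite claim // /nbrs !inE eqxx.
rewrite E1 E2 E3 E4 E5.
apply: (star Hf (uniq_phi i j) (@nbr i j)).
by rewrite /nbrs !inE eqxx.
Qed.

Lemma hh_perm_m i j : hh (i + Z.of_nat m) j = hh i j.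
Proof.
rewrite /hh /phi zo_add.
by rewrite (_ : (i + Z.of_nat m - 1 = (i - 1) + Z.of_nat m)%Z) ?zo_add //; lia.
Qed.

Lemma hh_perm_n i j : hh i (j + Z.of_nat n) = hh i j.
Proof. by rewrite /hh /phi zo_add. Qed.

Lemma mod5 : m %% 5 = 0 /\ n %% 5 = 0.
Proof.
have Hm5 := @core hh rainbow (Z.of_nat m) ltac:(lia) hh_perm_m.
have Hrb' : forall i j, uniq [:: hh j (i+1); hh j (i-1); hh (j+1) i; hh (j-1) i; hh j i].
  move=> i j; have := rainbow j i.
  rewrite /= !inE !negb_or.
  move=> /and5P[/and4P[p1 p2 p3 p4] /and3P[p5 p6 p7] /andP[p8 p9] p10 _].
  by rewrite p1 p4 p7 p8 p9 p10 !(eq_sym (hh j (i+1))) !(eq_sym (hh j (i-1))) p2 p3 p5 p6.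
have Hn5 := @core (fun i j => hh j i) Hrb' (Z.of_nat n) ltac:(lia)
  (fun i j => hh_perm_n j i).
split; Z.to_euclidean_division_equations; lia.
Qed.
End Col5.


Lemma lb k (f : {ffun V * {set V} -> 'I_k}) : incidence_coloring adj f -> 5 <= k.
Proof.
move=> Hf.
have := star Hf (uniq_phi 0 0) (@nbr 0 0) (_ : phi (0+1) 0 \in nbrs 0 0).
by move=> /(_ (mem_head _ _)) /uniq_le.
Qed.

Definition Cr p (a b : nat) := b = a.+1 \/ (b = 0 /\ a.+1 = p) \/ a = b.+1 \/ (a = 0 /\ b.+1 = p).

Lemma cr p (a b : 'I_p) : cycle_adj p a b -> Cr p a b.
Proof.
have succ (x : nat) : x < p -> (x.+1 %% p = x.+1) \/ (x.+1 %% p = 0 /\ x.+1 = p).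
  move=> H; case: (ltngtP x.+1 p) => [lt|gt|eq].
  - by left; rewrite modn_small.
  - lia.
  - by right; rewrite eq modnn.
rewrite /cycle_adj /Cr => /orP[/eqP E|/eqP E].
  case: (succ a (ltn_ord a)) => [E'|[E' E'']]; rewrite E E'; lia.
case: (succ b (ltn_ord b)) => [E'|[E' E'']]; rewrite E E'; lia.
Qed.

Lemma tadj (x y : V) : adj x y ->
  ((x.1 : nat) = y.1 /\ Cr n x.2 y.2) \/ ((x.2 : nat) = y.2 /\ Cr m x.1 y.1).
Proof.
rewrite /torus_adj /box_adj => /orP[/andP[/eqP E H]|/andP[/eqP E H]].
  by left; rewrite E; split=> //; apply: cr.
by right; rewrite E; split=> //; apply: cr.
Qed.

Lemma tadj_sym x y : adj x y -> adj y x.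
Proof.
rewrite /torus_adj /box_adj /cycle_adj => /orP[/andP[/eqP E H]|/andP[/eqP E H]];
  apply/orP; [left|right]; rewrite E eqxx /=; by rewrite orbC.
Qed.

Lemma tadj_irr x y : adj x y -> x != y.
Proof.
move=> A; apply/negP => /eqP E; subst y.
case: (tadj A); rewrite /Cr; lia.
Qed.

Definition col5 (v : V) : 'I_5 := Ordinal (ltn_pmod (v.1 + 2 * v.2) (isT : 0 < 5)).

Lemma colorable5 : 5 %| m -> 5 %| n -> incidence_colorable adj 5.
Proof.
case/dvdnP => p Hp; case/dvdnP => q Hq.
apply/existsP; exists [ffun a => col5 (oth a.1 a.2)].
apply: col2_ok.
- exact: tadj_sym.
- exact: tadj_irr.
- move=> [x1 x2] [y1 y2] /tadj /= A; apply/negP => /eqP /(congr1 val) /=.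
  have := ltn_ord x1; have := ltn_ord x2; have := ltn_ord y1; have := ltn_ord y2.
  move: A; rewrite /Cr; lia.
- move=> [v1 v2] [x1 x2] [y1 y2] /tadj /= A /tadj /= B.
  rewrite xpair_eqE negb_and => N; apply/negP => /eqP /(congr1 val) /=.
  have N' : (x1 : nat) <> y1 \/ (x2 : nat) <> y2.
    case/orP: N => /eqP N; [left|right] => E; apply: N; exact: val_inj.
  have := ltn_ord x1; have := ltn_ord x2; have := ltn_ord y1; have := ltn_ord y2.
  have := ltn_ord v1; have := ltn_ord v2.
  move: A B N'; rewrite /Cr; lia.
Qed.
End Tor.

Theorem corollary1 (m n : nat) (hm : 3 <= m) (hn : 3 <= n) :
  5 <= incidence_chromatic_number (torus_adj m n) /\
  (incidence_chromatic_number (torus_adj m n) = 5 <->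
     (m %% 5 = 0 /\ n %% 5 = 0)).
Proof.
rewrite /incidence_chromatic_number.
case: ex_minnP => k Hk Hmin.
have L5 : 5 <= k.
  by case/existsP: Hk => f Hf; apply: (lb hm hn Hf).
split=> //; split.
  move=> Ek; subst k.
  by case/existsP: Hk => f Hf; apply: (mod5 hm hn Hf).
move=> [H1 H2].
have := Hmin 5 (colorable5 hm hn _ _); rewrite /dvdn ?H1 ?H2 => /(_ isT isT) K.
by apply/eqP; rewrite eqn_leq K L5.
Qed.
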